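(* Let $n,m$ be positive integers and $s$ a real number with $0\le s\le n/2$. Define $$g(\alpha)=\sum_{i=1}^n\Big(i\alpha_i+m\big(\alpha_i+1-\tfrac{2s}{n}\big)^+\Big)$$ on the polytope $\mathcal{P}=\{\alpha\in\mathbb{R}^n:\ \tfrac{2s}{n}\ge\alpha_1\ge\alpha_2\ge\cdots\ge\alpha_n,\ \sum_{i=1}^n\alpha_i=0\}$. If $m\ge\lceil 2s\rceil-1$, then $$\min_{\alpha\in\mathcal{P}}g(\alpha)=d_1(s):=(-n-2m+2\lfloor 2s\rfloor+1)s+mn-\tfrac{\lfloor 2s\rfloor}{2}(\lfloor 2s\rfloor+1).$$
   Context: $(x)^+=\max(0,x)$. The function $d_1$ takes the value $(m-s)(n-2s)$ when $2s\in\mathbb{Z}$ and is linear in between. *)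

(* Defs.v *)
From Stdlib Require Import Reals Lra Lia ZArith.
Open Scope R_scope.

Fixpoint sum1 (n : nat) (f : nat -> R) : R :=
  match n with
  | O => 0
  | S k => sum1 k f + f (S k)
  end.

Definition floorR (x : R) : Z := Int_part x.   (* Int_part x = up x - 1 = floor x *)
Definition ceilR (x : R) : Z := (- Int_part (- x))%Z.

Definition pos_part (x : R) : R := Rmax 0 x.

(* alpha : nat -> R, only alpha 1 .. alpha n are relevant *)
Definition gfun (n m : nat) (s : R) (alpha : nat -> R) : R :=
  sum1 n (fun i => INR i * alpha i + INR m * pos_part (alpha i + 1 - 2 * s / INR n)).

Definition inP (n : nat) (s : R) (alpha : nat -> R) : Prop :=
  (n >= 1)%nat /\ alpha 1%nat <= 2 * s / INR n /\
  (forall i : nat, (1 <= i)%nat -> (i < n)%nat -> alpha (S i) <= alpha i) /\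
  sum1 n alpha = 0.

Definition d1val (n m : nat) (s : R) : R :=
  let F := IZR (floorR (2 * s)) in
  (- INR n - 2 * INR m + 2 * F + 1) * s + INR m * INR n - F / 2 * (F + 1).

(* Main.v *)
Require Import Defs.
From Stdlib Require Import Reals Lra Lia ZArith.
Open Scope R_scope.

Lemma sum1_le N F G : (forall i, (1 <= i <= N)%nat -> F i <= G i) -> sum1 N F <= sum1 N G.
Proof.
  induction N; intros H; cbn [sum1]. lra.
  assert (H1: sum1 N F <= sum1 N G) by (apply IHN; intros; apply H; lia).
  assert (F (S N) <= G (S N)) by (apply H; lia). lra.
Qed.

Lemma sum1_ext N F G : (forall i, (1 <= i <= N)%nat -> F i = G i) -> sum1 N F = sum1 N G.
Proof.
  induction N; intros H; cbn [sum1]. lra.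
  rewrite IHN by (intros; apply H; lia). rewrite (H (S N)) by lia. reflexivity.
Qed.

Lemma sum1_add N F G : sum1 N (fun i => F i + G i) = sum1 N F + sum1 N G.
Proof. induction N; cbn [sum1]; [lra| rewrite IHN; ring]. Qed.
Lemma sum1_sub N F G : sum1 N (fun i => F i - G i) = sum1 N F - sum1 N G.
Proof. induction N; cbn [sum1]; [lra| rewrite IHN; ring]. Qed.
Lemma sum1_scal N c F : sum1 N (fun i => c * F i) = c * sum1 N F.
Proof. induction N; cbn [sum1]; [lra| rewrite IHN; ring]. Qed.
Lemma sum1_const N c : sum1 N (fun _ => c) = INR N * c.
Proof. induction N; cbn [sum1]; [simpl; lra| rewrite IHN, S_INR; ring]. Qed.
Lemma sum1_id N : sum1 N INR = INR N * (INR N + 1) / 2.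
Proof. induction N; cbn [sum1]; [simpl; lra| rewrite IHN, S_INR; field]. Qed.

Definition gam (p : nat) (f : R) (i : nat) : R :=
  if Nat.leb i p then 1 else if Nat.eqb i (S p) then f else 0.

Lemma gam_le p f i : (i <= p)%nat -> gam p f i = 1.
Proof. intro H; unfold gam; rewrite (proj2 (Nat.leb_le _ _) H); reflexivity. Qed.
Lemma gam_eq p f : gam p f (S p) = f.
Proof. unfold gam; rewrite (proj2 (Nat.leb_gt _ _)) by lia; rewrite Nat.eqb_refl; reflexivity. Qed.
Lemma gam_gt p f i : (S p < i)%nat -> gam p f i = 0.
Proof. intro H; unfold gam; rewrite (proj2 (Nat.leb_gt _ _)) by lia;
  rewrite (proj2 (Nat.eqb_neq _ _)) by lia; reflexivity. Qed.

Lemma gam_cases p f i : ((i <= p)%nat /\ gam p f i = 1) \/ (i = S p /\ gam p f i = f)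
   \/ ((S p < i)%nat /\ gam p f i = 0).
Proof.
  destruct (le_lt_dec i p). left; split; [lia|apply gam_le; lia].
  destruct (Nat.eq_dec i (S p)). right; left; subst; split; [reflexivity|apply gam_eq].
  right; right; split; [lia|apply gam_gt; lia].
Qed.

Lemma sum_gam_le p f N : (N <= p)%nat -> sum1 N (gam p f) = INR N.
Proof. induction N; intros; cbn [sum1]. simpl; lra.
  rewrite IHN by lia; rewrite gam_le by lia; rewrite S_INR; ring. Qed.
Lemma sum_gam_gt p f N : (p < N)%nat -> sum1 N (gam p f) = INR p + f.
Proof. induction N; intros. lia. cbn [sum1].
  destruct (Nat.eq_dec N p). subst; rewrite sum_gam_le by lia; rewrite gam_eq; ring.
  rewrite IHN by lia; rewrite gam_gt by lia; ring. Qed.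
Lemma sum_igam_le p f N : (N <= p)%nat -> sum1 N (fun i => INR i * gam p f i) = INR N * (INR N + 1) / 2.
Proof. induction N; intros; cbn [sum1]. simpl; lra.
  rewrite IHN by lia; rewrite gam_le by lia; rewrite S_INR; field. Qed.
Lemma sum_igam_gt p f N : (p < N)%nat -> sum1 N (fun i => INR i * gam p f i) = INR p * (INR p + 1) / 2 + (INR p + 1) * f.
Proof. induction N; intros. lia. cbn [sum1].
  destruct (Nat.eq_dec N p). subst; rewrite sum_igam_le by lia; rewrite gam_eq, S_INR; field.
  rewrite IHN by lia; rewrite gam_gt by lia; ring. Qed.

Lemma pos_eq x : 0 <= x -> pos_part x = x.
Proof. intro; unfold pos_part; apply Rmax_right; lra. Qed.
Lemma pos_ge x : 0 <= pos_part x /\ x <= pos_part x.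
Proof. unfold pos_part; split; [apply Rmax_l|apply Rmax_r]. Qed.

Lemma term_ineq (i p m : nat) (t f a : R) (hf : 0 <= f < 1)
  (hin : INR i <= INR p + 1 + INR m) (ha : (i <= p)%nat -> a <= t) :
  INR i * (t - 1 + gam p f i) + INR m * pos_part (t - 1 + gam p f i + 1 - t)
  + (INR p + 1 + INR m) * (a - (t - 1 + gam p f i))
  <= INR i * a + INR m * pos_part (a + 1 - t).
Proof.
  assert (Hm : 0 <= INR m) by apply pos_INR.
  destruct (pos_ge (a + 1 - t)) as [P1 P2].
  assert (Q : 0 <= INR m * (pos_part (a + 1 - t) - (a + 1 - t))) by (apply Rmult_le_pos; lra).
  destruct (gam_cases p f i) as [[Hi Hg]|[[Hi Hg]|[Hi Hg]]]; rewrite Hg.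
  - rewrite pos_eq by lra. apply le_INR in Hi. specialize (ha (INR_le _ _ Hi)).
    replace (t - 1 + 1 + 1 - t) with 1 by ring.
    assert (0 <= (INR p + 1 - INR i) * (t - a)) by (apply Rmult_le_pos; lra). nra.
  - rewrite pos_eq by lra. subst i. rewrite S_INR. nra.
  - replace (t - 1 + 0 + 1 - t) with 0 by ring. rewrite pos_eq by lra.
    apply lt_INR in Hi. rewrite S_INR in Hi.
    destruct (Rle_dec 0 (a + 1 - t)).
    + rewrite pos_eq by lra.
      assert (0 <= (INR i - INR p - 1) * (a + 1 - t)) by (apply Rmult_le_pos; lra). nra.
    + assert (0 <= (INR p + 1 + INR m - INR i) * (t - a - 1)) by (apply Rmult_le_pos; lra).
      assert (0 <= INR m * pos_part (a + 1 - t)) by (apply Rmult_le_pos; lra). nra.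
Qed.

Theorem mainTheorem5 (n m : nat) (s : R)
  (hn : (0 < n)%nat) (hm : (0 < m)%nat)
  (hs0 : 0 <= s) (hs1 : s <= INR n / 2)
  (hms : INR m >= IZR (ceilR (2 * s)) - 1) :
  (forall alpha : nat -> R, inP n s alpha -> d1val n m s <= gfun n m s alpha) /\
  (exists alpha : nat -> R, inP n s alpha /\ gfun n m s alpha = d1val n m s).
Proof.
  assert (Hn : 0 < INR n) by (apply lt_0_INR; lia).
  remember (2 * s / INR n) as t eqn:Etd.
  assert (Ht : INR n * t = 2 * s) by (rewrite Etd; field; lra).
  assert (Ht1 : t <= 1) by nra.
  pose proof (base_Int_part (2*s)) as [Hk1 Hk2].
  pose proof (base_Int_part (-(2*s))) as [Hc1 Hc2].
  unfold ceilR in hms.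
  remember (Int_part (2*s)) as k eqn:Ek.
  remember (- Int_part (-(2*s)))%Z as c eqn:Ec.
  assert (Hc : IZR c = - IZR (Int_part (-(2*s)))) by (rewrite Ec, opp_IZR; reflexivity).
  assert (Hcm1 : (-1 < c)%Z) by (apply lt_IZR; lra).
  assert (Hcn1 : (c < Z.of_nat n + 1)%Z) by (apply lt_IZR; rewrite plus_IZR, <- INR_IZR_INZ; simpl (IZR 1); lra).
  assert (Hkc : (k <= c)%Z) by (apply le_IZR; lra).
  assert (Hck : (c < k + 2)%Z) by (apply lt_IZR; rewrite plus_IZR; simpl (IZR 2); lra).
  set (cn := Z.to_nat c).
  assert (Hcn : INR cn = IZR c) by (unfold cn; rewrite INR_IZR_INZ, Z2Nat.id by lia; reflexivity).
  assert (Hcnn : (cn <= n)%nat) by (unfold cn; lia).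
  set (p := (n - cn)%nat).
  assert (HP : INR p = INR n - INR cn) by (unfold p; apply minus_INR; exact Hcnn).
  set (f := IZR c - 2 * s).
  assert (Hf : 0 <= f < 1) by (unfold f; lra).
  assert (Hcm : (cn <= m + 1)%nat) by (apply INR_le; rewrite plus_INR; change (INR 1) with 1; lra).
  assert (Hnp : (n <= p + 1 + m)%nat) by (unfold p; lia).
  set (astar := fun i => t - 1 + gam p f i).
  assert (Hsums : sum1 n (gam p f) = INR p + f /\
                  sum1 n (fun i => INR i * gam p f i) = INR p * (INR p + 1) / 2 + (INR p + 1) * f).
  { destruct (Nat.eq_dec p n) as [E|E].
    - assert (cn = 0%nat) by (unfold p in E; lia).
      assert (f = 0) by (unfold f; assert (IZR c = 0) by (rewrite <- Hcn, H; reflexivity); lra).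
      rewrite H0, <- E, sum_gam_le, sum_igam_le by lia. split; ring.
    - rewrite sum_gam_gt, sum_igam_gt by (unfold p in *; lia). split; reflexivity. }
  destruct Hsums as [S1 S2].
  assert (Ssum : sum1 n astar = 0).
  { unfold astar. rewrite sum1_add, sum1_const, S1, HP, Hcn. unfold f. lra. }
  assert (Sg : gfun n m s astar = d1val n m s).
  { unfold gfun. rewrite <- Etd.
    rewrite (sum1_ext n _ (fun i => (t - 1) * INR i + (INR i * gam p f i + INR m * gam p f i))).
    2:{ intros i _. unfold astar. rewrite pos_eq.
        - ring.
        - destruct (gam_cases p f i) as [[_ H]|[[_ H]|[_ H]]]; rewrite H; lra. }
    rewrite sum1_add, sum1_add, sum1_scal, sum1_scal, sum1_id, S1, S2.
    replace ((t - 1) * (INR n * (INR n + 1) / 2)) with ((2 * s - INR n) * (INR n + 1) / 2)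
      by (rewrite <- Ht; field).
    unfold d1val, floorR. rewrite <- Ek. rewrite HP, Hcn. unfold f.
    assert (c = k \/ c = (k + 1)%Z) as [E|E] by lia.
    - rewrite E. assert (s = IZR k / 2) as -> by (rewrite E in *; lra). field.
    - rewrite E, plus_IZR. simpl (IZR 1).  field. }
  split.
  - intros alpha [_ [Ha1 [Hdec Hsum]]].
    rewrite <- Etd in Ha1.
    assert (Hle : forall i, (1 <= i <= n)%nat -> alpha i <= t).
    { induction i; intros Hi. lia.
      destruct (Nat.eq_dec i 0). subst; exact Ha1.
      specialize (Hdec i ltac:(lia) ltac:(lia)). specialize (IHi ltac:(lia)). lra. }
    rewrite <- Sg.
    set (K := INR p + 1 + INR m).
    assert (H : sum1 n (fun i => (INR i * astar i + INR m * pos_part (astar i + 1 - 2 * s / INR n))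
                                 + K * (alpha i - astar i))
                <= gfun n m s alpha).
    { unfold gfun. apply sum1_le. intros i Hi. unfold astar, K. rewrite <- Etd.
      apply term_ineq; [exact Hf| |].
      - assert (Hi2 : (i <= p + 1 + m)%nat) by lia. apply le_INR in Hi2.
        rewrite !plus_INR in Hi2. change (INR 1) with 1 in Hi2. exact Hi2.
      - intro. apply Hle. lia. }
    rewrite sum1_add, sum1_scal, sum1_sub, Hsum, Ssum in H.
    unfold gfun in *. lra.
  - exists astar. split; [|exact Sg].
    unfold inP. rewrite <- Etd. split; [lia|]. split.
    + unfold astar. destruct (gam_cases p f 1) as [[_ H]|[[_ H]|[_ H]]]; rewrite H; lra.
    + split; [|exact Ssum]. intros i _ _. unfold astar.
      destruct (gam_cases p f i) as [[Hi H]|[[Hi H]|[Hi H]]];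
      destruct (gam_cases p f (S i)) as [[Hj H']|[[Hj H']|[Hj H']]]; rewrite H, H'; try lra; lia.
Qed.
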